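(* Let $\varphi$ be an AND-OR formula in which every gate has fan-in two, with its checkpoints placed and the associated formula $\varphi'$ formed as described in the context. Let $v'$ be an internal vertex of $\varphi'$, with children $c'_1,c'_2,\dots,c'_{J+1}$ sorted in decreasing order of their distances from the root of $\varphi'$, and with $s_{c'_1}\ge s_{c'_2}$. Then for every $j\ge 2$, $s_{c'_j}\le s_{v'}/2$. If $v'$ is not a small vertex, then $s_{c'_1}\le s_{v'}-\frac{1}{\sqrt 2}\sqrt{s_{v'}}$.
   Context: An AND-OR formula with fan-in-two gates is a rooted binary tree (root $r$) whose internal vertices are AND or OR gates and whose leaves are input variables. For an internal vertex $v$, $s_1(v)\ge s_2(v)\ge1$ are the numbers of leaves of its two input subformulas (child 1 is a larger one, ties broken arbitrarily). Define $\alpha(v)=\epsilon(v)=\bigl((\sqrt{s_1(v)}+\sqrt{s_2(v)})/\sqrt{s_1(v)+s_2(v)}\bigr)^{1/2}$. Checkpoint placement. Step 1: for every internal vertex $v$, mark the edge from $v$ to its smaller input subformula (child 2). Afterwards every internal vertex has exactly one unmarked edge to a child, so the unmarked edges partition the internal vertices into paths; let $\mathcal{S}$ be the set of vertices that are, for one of these paths, the endpoint closer to $r$. Step 2: for each such path, starting at its far end and moving toward the root, keep track of the product of $\alpha(v)$ (for AND gates) or $\epsilon(v)$ (for OR gates) over the internal vertices added so far; after adding a vertex that makes this product exceed $\sqrt e$, split the path by marking (checkpointing) the edge from that vertex to the next vertex of the path toward the root, and restart the product. The marked edges (''checkpoints'') divide the internal vertices of $\varphi$ into checkpointed paths. The formula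 $\varphi'$: its internal vertices are the checkpointed paths $\xi$ of $\varphi$, its leaves are the leaves of $\varphi$; the children in $\varphi'$ of a path $\xi$ with $J$ internal vertices are the $J+1$ subformulas hanging off $\xi$ (each a leaf of $\varphi$ or the path beginning at the corresponding child vertex). For a vertex $v'$ of $\varphi'$, $s_{v'}$ is the number of leaves of $\varphi$ in the subformula rooted at $v'$ (equal to $1$ for a leaf). An internal vertex $v'$ of $\varphi'$ is small if its checkpointed path has an endpoint in $\mathcal{S}$. *)

(* Defs.v *)
From Stdlib Require Import Reals List Sorted Permutation Arith.
Import ListNotations.
Open Scope R_scope.

Inductive gate := AND | OR.

Inductive formula :=
| Leaf (x : nat)
| Node (g : gate) (t1 t2 : formula).
(* In [Node g t1 t2], t1 is "child 1" and t2 is "child 2". *)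

Fixpoint leaves (t : formula) : nat :=
  match t with
  | Leaf _ => 1%nat
  | Node _ t1 t2 => (leaves t1 + leaves t2)%nat
  end.

(* Child 1 is a larger input subformula at every gate: s_1(v) >= s_2(v).
   (Ties are broken by the order in which the children are listed.) *)
Fixpoint child1_larger (t : formula) : Prop :=
  match t with
  | Leaf _ => True
  | Node _ t1 t2 => (leaves t2 <= leaves t1)%nat /\ child1_larger t1 /\ child1_larger t2
  end.

Definition alpha (s1 s2 : nat) : R :=
  sqrt ((sqrt (INR s1) + sqrt (INR s2)) / sqrt (INR (s1 + s2))).
Definition epsilon (s1 s2 : nat) : R :=
  sqrt ((sqrt (INR s1) + sqrt (INR s2)) / sqrt (INR (s1 + s2))).

Definition gate_weight (g : gate) (s1 s2 : nat) : R :=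
  match g with AND => alpha s1 s2 | OR => epsilon s1 s2 end.

(* Running product of Step 2 at an internal vertex v: the product of the
   weights of the vertices added since the last restart, going up the path
   of unmarked edges from its far end up to and including v.  The edge from
   v to child 1 (when child 1 is internal) is a checkpoint iff the product
   at child 1 exceeds sqrt e, in which case the product restarts. *)
Fixpoint acc (t : formula) : R :=
  match t with
  | Leaf _ => 1
  | Node g t1 t2 =>
      gate_weight g (leaves t1) (leaves t2) *
      match t1 with
      | Leaf _ => 1
      | Node _ _ _ => if Rlt_dec (sqrt (exp 1)) (acc t1) then 1 else acc t1
      end
  end.

Definition checkpoint_at (t1 : formula) : bool :=
  match t1 with
  | Leaf _ => false
  | Node _ _ _ => if Rlt_dec (sqrt (exp 1)) (acc t1) then true else false
  end.

(* Children in phi' of the checkpointed path starting at the (internal)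
   vertex [t], each paired with its distance (in phi) below the top vertex
   of the path; adding the depth of the top vertex gives the distance from
   the root r, so orderings by this number and by distance from r agree. *)
Fixpoint path_children (d : nat) (t : formula) : list (nat * formula) :=
  match t with
  | Leaf _ => []
  | Node _ t1 t2 =>
      (S d, t2) ::
      match t1 with
      | Leaf _ => [(S d, t1)]
      | Node _ _ _ =>
          if Rlt_dec (sqrt (exp 1)) (acc t1) then [(S d, t1)]
          else path_children (S d) t1
      end
  end.

(* Enumeration of the internal vertices of phi': each checkpointed path is
   represented by the subformula rooted at its top vertex, together with a
   flag telling whether it is small (has an endpoint in S).
   [st] = Some b : the current vertex starts a checkpointed path, small iff b;
   [st] = None   : the current vertex continues the path of its parent.
   A path starts at the root (in S), at a child-2 internal vertex (in S), or
   at a child-1 internal vertex whose parent edge is a checkpoint (not in S;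
   its bottom endpoint is then a child-1 vertex or itself, also not in S). *)
Fixpoint walk (st : option bool) (t : formula) : list (bool * formula) :=
  match t with
  | Leaf _ => []
  | Node _ t1 t2 =>
      (match st with Some b => [(b, t)] | None => [] end) ++
      walk (if checkpoint_at t1 then Some false else None) t1 ++
      walk (Some true) t2
  end.

Definition phi'_internal (phi : formula) : list (bool * formula) :=
  walk (Some true) phi.

(* Main.v *)
Require Import Defs.
From Stdlib Require Import Reals List Sorted Permutation Arith Lra Lia.
Import ListNotations.
Open Scope R_scope.

Definition is_node (t : formula) : Prop :=
  match t with Node _ _ _ => True | _ => False end.

Fixpoint bot1 (t : formula) : formula :=
  match t with
  | Leaf _ => t
  | Node _ t1 t2 =>
      match t1 with
      | Leaf _ => t1
      | Node _ _ _ => if Rlt_dec (sqrt (exp 1)) (acc t1) then t1 else bot1 t1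
      end
  end.

Lemma leaves_pos : forall t, (1 <= leaves t)%nat.
Proof. induction t; simpl; lia. Qed.

Lemma bot1_le : forall t, (leaves (bot1 t) <= leaves t)%nat.
Proof.
  induction t as [x|g t1 IH1 t2 IH2]; cbn [bot1]; [lia|].
  destruct t1 as [y|g' a b].
  - cbn [leaves]; lia.
  - destruct (Rlt_dec _ _); cbn [leaves] in *; lia.
Qed.

Lemma gw_eq : forall g s1 s2, gate_weight g s1 s2 = alpha s1 s2.
Proof. destruct g; reflexivity. Qed.

Lemma w_bound : forall s1 s2 K, 0 < K -> K <= INR s1 -> (1 <= s2)%nat ->
  alpha s1 s2 <= exp (INR s2 / (2 * sqrt K)).
Proof.
  intros s1 s2 K HK HKs Hs2. unfold alpha.
  rewrite plus_INR.
  assert (H2 : 1 <= INR s2) by (apply (le_INR 1); exact Hs2).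
  assert (Hs1 : 0 <= INR s1) by apply pos_INR.
  set (S := sqrt (INR s1 + INR s2)).
  assert (HS : sqrt K <= S) by (apply sqrt_le_1_alt; lra).
  assert (HsK : 0 < sqrt K) by (apply sqrt_lt_R0; lra).
  assert (HS1 : sqrt (INR s1) <= S) by (apply sqrt_le_1_alt; lra).
  assert (Hb : sqrt (INR s2) <= INR s2).
  { assert (E := sqrt_sqrt (INR s2) ltac:(lra)).
    assert (1 <= sqrt (INR s2)) by (rewrite <- sqrt_1; apply sqrt_le_1_alt; lra).
    nra. }
  set (y := INR s2 / sqrt K).
  assert (Hy : 0 <= y) by (unfold y; unfold Rdiv; apply Rmult_le_pos; [lra|left; apply Rinv_0_lt_compat; lra]).
  assert (Hq : (sqrt (INR s1) + sqrt (INR s2)) / S <= 1 + y).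
  { assert (HSp : 0 < S) by lra.
    unfold y. unfold Rdiv.
    assert (E1 : S * / S = 1) by (field; lra).
    assert (E2 : sqrt K * / sqrt K = 1) by (field; lra).
    assert (0 < / S) by (apply Rinv_0_lt_compat; lra).
    assert (0 < / sqrt K) by (apply Rinv_0_lt_compat; lra).
    assert (Hk : INR s2 <= S * (INR s2 * / sqrt K)).
    { assert (sqrt K * (INR s2 * / sqrt K) = INR s2) by (field; lra). nra. }
    assert (Ha : sqrt (INR s1) + sqrt (INR s2) <= S * (1 + INR s2 * / sqrt K)) by nra.
    assert (((sqrt (INR s1) + sqrt (INR s2)) * / S) * S <= (1 + INR s2 * / sqrt K) * S).
    { replace (((sqrt (INR s1) + sqrt (INR s2)) * / S) * S) with (sqrt (INR s1) + sqrt (INR s2)) by (field; lra). nra. }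
    nra. }
  assert (Ee : exp (INR s2 / (2 * sqrt K)) = sqrt (exp y)).
  { rewrite <- (sqrt_square (exp (INR s2 / (2 * sqrt K)))).
    2: { left; apply exp_pos. }
    f_equal. rewrite <- exp_plus. f_equal. unfold y. field. lra. }
  rewrite Ee. apply sqrt_le_1_alt.
  pose proof (exp_ineq1_le y). lra.
Qed.

Lemma acc_nonneg : forall t, 0 <= acc t.
Proof.
  induction t as [x|g t1 IH1 t2 IH2]; cbn [acc]; [lra|].
  apply Rmult_le_pos; [rewrite gw_eq; apply sqrt_pos|].
  destruct t1; [lra|]. destruct (Rlt_dec _ _); lra.
Qed.

Lemma acc_bound : forall t, child1_larger t -> is_node t ->
  acc t <= exp ((INR (leaves t) - INR (leaves (bot1 t))) / (2 * sqrt (INR (leaves (bot1 t))))).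
Proof.
  induction t as [x|g t1 IH1 t2 IH2]; [contradiction|].
  intros [H21 [H1 H2]] _. cbn [acc bot1]. rewrite gw_eq.
  change (leaves (Node g t1 t2)) with (leaves t1 + leaves t2)%nat.
  rewrite plus_INR.
  assert (Hl2 := leaves_pos t2).
  destruct t1 as [y|g' a b].
  - replace (INR (leaves (Leaf y)) + INR (leaves t2) - INR (leaves (Leaf y))) with (INR (leaves t2)) by ring.
    rewrite Rmult_1_r. apply w_bound; auto; [|lra].
    apply (lt_INR 0); apply leaves_pos.
  - destruct (Rlt_dec _ _) as [Hlt|Hge].
    + replace (INR (leaves (Node g' a b)) + INR (leaves t2) - INR (leaves (Node g' a b))) with (INR (leaves t2)) by ring.
      rewrite Rmult_1_r. apply w_bound; auto; [|lra].
      apply (lt_INR 0); apply leaves_pos.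
    + set (T1 := Node g' a b) in *.
      specialize (IH1 H1 I).
      assert (HK : 0 < INR (leaves (bot1 T1))) by (apply (lt_INR 0); apply leaves_pos).
      assert (HKs : INR (leaves (bot1 T1)) <= INR (leaves T1)) by (apply le_INR; apply bot1_le).
      assert (Hw := w_bound (leaves T1) (leaves t2) _ HK HKs Hl2).
      assert (HsK : 0 < sqrt (INR (leaves (bot1 T1)))) by (apply sqrt_lt_R0; lra).
      replace ((INR (leaves T1) + INR (leaves t2) - INR (leaves (bot1 T1))) / (2 * sqrt (INR (leaves (bot1 T1)))))
        with (INR (leaves t2) / (2 * sqrt (INR (leaves (bot1 T1)))) +
              (INR (leaves T1) - INR (leaves (bot1 T1))) / (2 * sqrt (INR (leaves (bot1 T1))))) by (field; lra).
      rewrite exp_plus.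
      apply Rmult_le_compat; auto.
      * unfold alpha; apply sqrt_pos.
      * apply acc_nonneg.
Qed.

Lemma final_ineq : forall v, child1_larger v -> is_node v -> sqrt (exp 1) < acc v ->
  INR (leaves (bot1 v)) <= INR (leaves v) - / sqrt 2 * sqrt (INR (leaves v)).
Proof.
  intros v Hc Hn Hlt.
  pose proof (acc_bound v Hc Hn) as Hb.
  set (K := INR (leaves (bot1 v))) in *.
  set (s := INR (leaves v)) in *.
  assert (HK1 : 1 <= K) by (apply (le_INR 1); apply leaves_pos).
  assert (HKs : K <= s) by (apply le_INR; apply bot1_le).
  assert (HsK1 : 1 <= sqrt K) by (rewrite <- sqrt_1; apply sqrt_le_1_alt; lra).
  assert (Ee : sqrt (exp 1) = exp (1/2)).
  { rewrite <- (sqrt_square (exp (1/2))); [|left; apply exp_pos].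
    f_equal. rewrite <- exp_plus. f_equal. field. }
  rewrite Ee in Hlt.
  assert (H : exp (1/2) < exp ((s - K) / (2 * sqrt K))) by lra.
  apply exp_lt_inv in H.
  set (T := s - K) in *.
  assert (HT : sqrt K < T).
  { assert (E : (T / (2 * sqrt K)) * (2 * sqrt K) = T) by (field; lra). nra. }
  assert (EK := sqrt_sqrt K ltac:(lra)).
  assert (HT2 : K < T * T) by nra.
  assert (Hs0 : 0 <= s) by lra.
  assert (Er := sqrt_sqrt s Hs0).
  assert (Hr := sqrt_pos s).
  assert (E2 := sqrt_sqrt 2 ltac:(lra)).
  assert (H2p : 0 < sqrt 2) by (apply sqrt_lt_R0; lra).
  set (u := / sqrt 2).
  assert (Hu : u * sqrt 2 = 1) by (unfold u; field; lra).
  assert (Hu0 : 0 < u) by (unfold u; apply Rinv_0_lt_compat; lra).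
  assert (Hu2 : u * u * 2 = 1) by nra.
  assert (Hsq : (u * sqrt s) * (u * sqrt s) = s / 2).
  { replace ((u * sqrt s) * (u * sqrt s)) with ((u * u) * (sqrt s * sqrt s)) by ring.
    rewrite Er. replace (u*u) with (1/2) by nra. field. }
  assert ((u * sqrt s) * (u * sqrt s) <= T * T) by (rewrite Hsq; unfold T in *; nra).
  assert (0 <= u * sqrt s) by nra.
  assert (u * sqrt s <= T) by nra.
  unfold T in *. lra.
Qed.

Lemma walk_prop : forall t st b v, child1_larger t -> In (b, v) (walk st t) ->
  child1_larger v /\ is_node v /\
  (b = false -> (v = t /\ st = Some false) \/ sqrt (exp 1) < acc v).
Proof.
  induction t as [x|g t1 IH1 t2 IH2]; cbn [walk]; [contradiction|].
  intros st b v Hc Hin. pose proof Hc as Hc'. destruct Hc as [H21 [H1 H2]].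
  apply in_app_or in Hin; destruct Hin as [Hin|Hin].
  - destruct st as [b0|]; [|contradiction]. destruct Hin as [Heq|[]].
    inversion Heq; subst. split; [exact Hc'|split; [exact I|]]. intros ->. left; auto.
  - apply in_app_or in Hin; destruct Hin as [Hin|Hin].
    + destruct (IH1 _ _ _ H1 Hin) as [A [B C]]. split; [|split]; auto.
      intros Hb. right. destruct (C Hb) as [[-> Hst]|Hl]; auto.
      destruct t1 as [y|g' a c]; [contradiction|].
      unfold checkpoint_at in Hst. destruct (Rlt_dec _ _); [assumption|discriminate].
    + destruct (IH2 _ _ _ H2 Hin) as [A [B C]]. split; [|split]; auto.
      intros Hb. destruct (C Hb) as [[_ Hst]|Hl]; [discriminate|auto].
Qed.

Lemma pc_struct : forall v, child1_larger v -> is_node v -> forall d,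
  exists P D x2,
    path_children d v = P ++ [(D, x2); (D, bot1 v)] /\ (S d <= D)%nat /\
    Forall (fun p => (fst p < D)%nat /\ (2 * leaves (snd p) <= leaves v)%nat) P /\
    (leaves x2 <= leaves (bot1 v))%nat /\ (2 * leaves x2 <= leaves v)%nat.
Proof.
  induction v as [x|g t1 IH1 t2 IH2]; [contradiction|].
  intros [H21 [H1 H2]] _ d. cbn [path_children bot1].
  change (leaves (Node g t1 t2)) with (leaves t1 + leaves t2)%nat.
  destruct t1 as [y|g' a b].
  - exists [], (S d), t2. repeat split; auto; lia.
  - destruct (Rlt_dec _ _).
    + exists [], (S d), t2. repeat split; auto; lia.
    + destruct (IH1 H1 I (S d)) as [P [D [x2 [Heq [HD [HP [Hx Hx2]]]]]]].
      exists ((S d, t2) :: P), D, x2. rewrite Heq. repeat split; auto; try lia.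
      constructor; [cbn [fst snd]; split; lia|].
      eapply Forall_impl; [|exact HP]. intros p [A B]; split; lia.
Qed.

Definition Rd (a b : nat * formula) : Prop := (fst b <= fst a)%nat.

Lemma head_max : forall x l e, StronglySorted Rd (x :: l) -> In e (x :: l) -> (fst e <= fst x)%nat.
Proof.
  intros x l e Hs [->|Hin]; [lia|].
  apply StronglySorted_inv in Hs as [_ Hf].
  rewrite Forall_forall in Hf. exact (Hf e Hin).
Qed.

Lemma head2 : forall cs P D (a b : formula),
  Permutation cs (P ++ [(D, a); (D, b)]) -> StronglySorted Rd cs ->
  Forall (fun p => (fst p < D)%nat) P ->
  exists x y rest, cs = x :: y :: rest /\
    ((x = (D, a) /\ y = (D, b)) \/ (x = (D, b) /\ y = (D, a))) /\ incl rest P.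
Proof.
  intros cs P D a b Hp Hs HP. rewrite Forall_forall in HP.
  destruct cs as [|x cs'].
  { apply Permutation_length in Hp. rewrite length_app in Hp. simpl in Hp. lia. }
  assert (HxL : In x (P ++ [(D, a); (D, b)])) by (eapply Permutation_in; [exact Hp|left; auto]).
  assert (Hfx : (D <= fst x)%nat).
  { apply (head_max x cs' (D, b) Hs). eapply Permutation_in; [apply Permutation_sym; exact Hp|].
    apply in_or_app; right; simpl; auto. }
  assert (Hx : x = (D, a) \/ x = (D, b)).
  { apply in_app_or in HxL. destruct HxL as [H|[H|[H|[]]]]; auto.
    specialize (HP x H). lia. }
  pose proof Hs as Hs'. apply StronglySorted_inv in Hs' as [Hs' _].
  destruct Hx as [Hx|Hx]; subst x.
  - apply Permutation_cons_app_inv in Hp.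
    destruct cs' as [|y rest].
    { apply Permutation_length in Hp. rewrite length_app in Hp. simpl in Hp. lia. }
    assert (HyL : In y (P ++ [(D, b)])) by (eapply Permutation_in; [exact Hp|left; auto]).
    assert (Hfy : (D <= fst y)%nat).
    { apply (head_max y rest (D, b) Hs'). eapply Permutation_in; [apply Permutation_sym; exact Hp|].
      apply in_or_app; right; simpl; auto. }
    assert (Hy : y = (D, b)).
    { apply in_app_or in HyL. destruct HyL as [H|[H|[]]]; auto.
      specialize (HP y H). lia. }
    subst y. apply Permutation_cons_app_inv in Hp. rewrite app_nil_r in Hp.
    exists (D, a), (D, b), rest. split; [reflexivity|split; [left; auto|]].
    intros z Hz. eapply Permutation_in; [exact Hp|exact Hz].
  - assert (Hp2 : Permutation ((D, b) :: cs') ((P ++ [(D, a)]) ++ (D, b) :: [])).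
    { rewrite <- app_assoc. exact Hp. }
    apply Permutation_cons_app_inv in Hp2. rewrite app_nil_r in Hp2.
    destruct cs' as [|y rest].
    { apply Permutation_length in Hp2. rewrite length_app in Hp2. simpl in Hp2. lia. }
    assert (HyL : In y (P ++ [(D, a)])) by (eapply Permutation_in; [exact Hp2|left; auto]).
    assert (Hfy : (D <= fst y)%nat).
    { apply (head_max y rest (D, a) Hs'). eapply Permutation_in; [apply Permutation_sym; exact Hp2|].
      apply in_or_app; right; simpl; auto. }
    assert (Hy : y = (D, a)).
    { apply in_app_or in HyL. destruct HyL as [H|[H|[]]]; auto.
      specialize (HP y H). lia. }
    subst y. assert (Hp3 : Permutation ((D, a) :: rest) (P ++ (D, a) :: [])) by exact Hp2.
    apply Permutation_cons_app_inv in Hp3. rewrite app_nil_r in Hp3.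
    exists (D, b), (D, a), rest. split; [reflexivity|split; [right; auto|]].
    intros z Hz. eapply Permutation_in; [exact Hp3|exact Hz].
Qed.

Lemma half_real : forall x v, (2 * x <= v)%nat -> INR x <= INR v / 2.
Proof.
  intros x v H. apply le_INR in H. rewrite mult_INR in H. simpl in H. lra.
Qed.

Theorem lemma3p12 :
  forall (phi : formula), child1_larger phi ->
  forall (small : bool) (v : formula), In (small, v) (phi'_internal phi) ->
  forall (cs : list (nat * formula)),
    Permutation cs (path_children 0 v) ->
    Sorted (fun a b => (fst b <= fst a)%nat) cs ->
    (match cs with
     | c1 :: c2 :: _ => (leaves (snd c2) <= leaves (snd c1))%nat
     | _ => True
     end) ->
    (forall j : nat, (1 <= j < length cs)%nat ->
       INR (leaves (snd (nth j cs (0%nat, Leaf 0)))) <= INR (leaves v) / 2) /\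
    (small = false ->
       INR (leaves (snd (nth 0 cs (0%nat, Leaf 0))))
         <= INR (leaves v) - / sqrt 2 * sqrt (INR (leaves v))).
Proof.
  intros phi Hphi small v Hin cs Hperm Hsort Hhd.
  destruct (walk_prop _ _ _ _ Hphi Hin) as [Hcl [Hnode Hsm]].
  destruct (pc_struct v Hcl Hnode 0) as [P [D [x2 [Heq [HD [HP [Hx21 Hx2]]]]]]].
  rewrite Heq in Hperm.
  apply Sorted_StronglySorted in Hsort.
  2: { intros p q r H1 H2; simpl in *; lia. }
  assert (HP' : Forall (fun p => (fst p < D)%nat) P) by (eapply Forall_impl; [|exact HP]; intros p []; auto).
  destruct (head2 cs P D x2 (bot1 v) Hperm Hsort HP') as [x [y [rest [Hcs [Hxy Hincl]]]]].
  subst cs. simpl in Hhd.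
  split.
  - intros j Hj. destruct j as [|j]; [lia|]. destruct j as [|j].
    + simpl. apply half_real.
      destruct Hxy as [[-> ->]|[-> ->]]; simpl in *; lia.
    + simpl. apply half_real. simpl in Hj.
      assert (Hr : In (nth j rest (0%nat, Leaf 0)) rest) by (apply nth_In; lia).
      apply Hincl in Hr. rewrite Forall_forall in HP. apply (HP _ Hr).
  - intros Hs. destruct (Hsm Hs) as [[_ Hst]|Hlt]; [discriminate|].
    pose proof (final_ineq v Hcl Hnode Hlt) as Hf.
    assert (Hle : (leaves (snd x) <= leaves (bot1 v))%nat)
      by (destruct Hxy as [[-> ->]|[-> ->]]; simpl in *; lia).
    apply le_INR in Hle. simpl. lra.
Qed.
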